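(* Let $Q\in\mathbb N$ and $k\in\mathbb N_0\cap[0,2Q-1]$. Then $\|1\|_{k,Q}=\frac{T^k}{k!}$, where $1$ denotes the constant function $[0,T]\times\mathbb R^d\ni(t,x)\mapsto1$.
   Context: $T\in(0,\infty)$, $d\in\mathbb N$, $(\Omega,\mathcal F,\mathbb P)$ a probability space and $W^0\colon[0,T]\times\Omega\to\mathbb R^d$ a standard Brownian motion. Gauss–Legendre weights: for $n\in\mathbb N$ let $c^n_1,\dots,c^n_n$ be the roots of $x\mapsto\frac{1}{2^nn!}\frac{d^n}{dx^n}[(x^2-1)^n]$; for $a\le b$ let $q^{n,[a,b]}(t)=\int_a^b\prod_{i:\,c^n_i\neq\frac{2t-(a+b)}{b-a}}\frac{2x-(b-a)c^n_i-(a+b)}{2t-(b-a)c^n_i-(a+b)}\,dx$ if $a<b$ and $\frac{2t-(a+b)}{b-a}\in\{c^n_1,\dots,c^n_n\}$, else $0$; sums $\sum_{t\in[a,b]}$ range over the finitely many points with nonzero weight. For $Q\in\mathbb N$: $\bar q^{0,Q}=\mathbb 1_{\{0\}}$, $\bar q^{n,Q}(t)=\sum_{s\in[0,t]}\bar q^{n-1,Q}(s)q^{Q,[s,T]}(t)$. Semi-norm: $\|V\|_{k,Q}=\sum_{t\in[0,T]}\bar q^{k,Q}(t)\sup_{s\in[t,T]}\sup_{u\in[0,s]}\sup_{z\in\mathbb R^d}(\mathbb E[|V(s,z+W^0_u)|^2])^{1/2}$. *)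

(* Defs.v *)
From HB Require Import structures.
From mathcomp Require Import all_boot all_order all_algebra.
From mathcomp Require Import all_classical all_reals all_analysis.
Set Implicit Arguments. Unset Strict Implicit. Unset Printing Implicit Defensive.
Import Order.TTheory GRing.Theory Num.Theory.
Import numFieldNormedType.Exports.
Local Open Scope classical_set_scope.
Local Open Scope ring_scope.

Section GL.
Variable R : realType.

Definition legendre (n : nat) : {poly R} :=
  ((2 ^ n * n`!)%:R)^-1 *: ((('X ^+ 2 - 1) ^+ n)^`(n)).

Definition lroots (n : nat) : set R := [set c | root (legendre n) c].

Definition resc (a b t : R) : R := (2 * t - (a + b)) / (b - a).

Definition gl_weight (n : nat) (a b t : R) : R :=
  if pselect ((a < b) /\ lroots n (resc a b t)) is left _ then
    Rintegral lebesgue_measure `[a, b]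
      (fun x => \big[*%R/1%R]_(c \in [set c | lroots n c /\ c <> resc a b t])
                  ((2 * x - (b - a) * c - (a + b)) /
                   (2 * t - (b - a) * c - (a + b))))
  else 0.

(* iterated weights \bar q^{n,Q}; sums range over the (finitely many)
   points with nonzero summand (finitely supported sums of fsbigop) *)
Fixpoint qbar (T : R) (Q : nat) (n : nat) (t : R) : R :=
  match n with
  | 0 => if t == 0 then 1 else 0
  | m.+1 => \sum_(s \in `[0, t]) (qbar T Q m s * gl_weight Q s T t)
  end.

(* extended-real square root (E[...] is nonnegative here) *)
Definition esqrt (x : \bar R) : \bar R :=
  match x with
  | r%:E => (Num.sqrt r)%:E
  | +oo%E => +oo%E
  | -oo%E => 0%E
  end.

Definition seminorm (T : R) (d : nat) (dO : measure_display)
  (Omega : measurableType dO) (P : probability Omega R)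
  (W : R -> Omega -> 'rV[R]_d) (V : R -> 'rV[R]_d -> R) (k Q : nat) : \bar R :=
  (\sum_(t \in [set` `[0, T]%R]) ((qbar T Q k t)%:E *
     ereal_sup [set ereal_sup [set ereal_sup
        (range (fun z : 'rV[R]_d =>
           esqrt (\int[P]_w ((V s (z + W u w)) ^+ 2)%:E)))
        | u in [set` `[0, s]%R]] | s in [set` `[t, T]%R]]))%E.

End GL.

(* Main.v *)
Require Import Defs.
From HB Require Import structures.
From mathcomp Require Import all_boot all_order all_algebra.
From mathcomp Require Import all_classical all_reals all_analysis.
From mathcomp Require Import polyrcf.
From mathcomp Require Import ring lra zify.
Set Implicit Arguments. Unset Strict Implicit. Unset Printing Implicit Defensive.
Import Order.TTheory GRing.Theory Num.Theory.
Import numFieldNormedType.Exports.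
Local Open Scope classical_set_scope.
Local Open Scope ring_scope.

Section Alg.
Variable R : realType.

Definition prim (p : {poly R}) : {poly R} :=
  \poly_(i < (size p).+1) (if i is j.+1 then p`_j / j.+1%:R else 0).

Lemma primK p : (prim p)^`() = p.
Proof.
apply/polyP => i; rewrite coef_deriv coef_poly.
case: ltnP => hi.
  by rewrite /= -[_ *+ _]mulr_natr divfK // pnatr_eq0.
by rewrite mul0rn nth_default // -ltnS.
Qed.

Definition J (a b : R) (p : {poly R}) : R := (prim p).[b] - (prim p).[a].

Lemma deriv_eq0_const (q : {poly R}) : q^`() = 0 -> q = (q`_0)%:P.
Proof.
move=> h; apply/polyP => i; rewrite coefC; case: i => [|i] //=.
have := congr1 (fun p : {poly R} => p`_i) h; rewrite coef_deriv coef0.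
by move/eqP; rewrite mulrn_eq0 /= => /eqP.
Qed.

Lemma J_prim a b p P : P^`() = p -> J a b p = P.[b] - P.[a].
Proof.
move=> hP.
have h : (P - prim p)^`() = 0 by rewrite derivB primK hP subrr.
have e := deriv_eq0_const h.
have -> : P = prim p + ((P - prim p)`_0)%:P by rewrite -e addrC subrK.
by rewrite /J !hornerE; lra.
Qed.

Lemma JD a b p q : J a b (p + q) = J a b p + J a b q.
Proof.
rewrite (@J_prim a b _ (prim p + prim q)); last by rewrite derivD !primK.
by rewrite /J !hornerD; lra.
Qed.

Lemma JZ a b c p : J a b (c *: p) = c * J a b p.
Proof.
rewrite (@J_prim a b _ (c *: prim p)); last by rewrite derivZ !primK.
by rewrite /J !hornerE; lra.
Qed.

Lemma J0 a b : J a b 0 = 0.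
Proof. by have := JZ a b 0 0; rewrite scale0r mul0r. Qed.

Lemma JN a b p : J a b (- p) = - J a b p.
Proof. by rewrite -scaleN1r JZ mulN1r. Qed.

Lemma J_sum a b (I : Type) (s : seq I) (F : I -> {poly R}) :
  J a b (\sum_(i <- s) F i) = \sum_(i <- s) J a b (F i).
Proof.
elim: s => [|x s IH]; first by rewrite !big_nil J0.
by rewrite !big_cons JD IH.
Qed.

Lemma J_byparts a b f g :
  J a b (f^`() * g) = (f * g).[b] - (f * g).[a] - J a b (f * g^`()).
Proof.
have h := @J_prim a b (f^`() * g + f * g^`()) (f * g) (derivM f g).
rewrite JD in h; rewrite -h; lra.
Qed.

Lemma size_derivn_le (p : {poly R}) n : (size (p^`(n)) <= size p - n)%N.
Proof.
apply/leq_sizeP => j hj; rewrite coef_derivn nth_default ?mul0rn //.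
by move: hj; rewrite leq_subLR addnC.
Qed.

Lemma size_deriv_le (p : {poly R}) : (size (p^`()) <= (size p).-1)%N.
Proof. by have := size_derivn_le p 1; rewrite derivn1 subn1. Qed.

Lemma derivn_XsubC_factor (c : R) n s i : (i <= n)%N ->
  exists r, ((('X - c%:P) ^+ n * s)^`(i)) = ('X - c%:P) ^+ (n - i) * r.
Proof.
elim: i => [|i IH] hi; first by exists s; rewrite derivn0 subn0.
have [r hr] := IH (ltnW hi).
have e : (n - i = (n - i.+1).+1)%N by rewrite subnSK.
exists (r *+ (n - i) + ('X - c%:P) * r^`()).
rewrite derivnS hr e derivM.
rewrite (derivCE R).2 derivXsubC mul1r /=.
rewrite mulrDr exprS; congr (_ + _).
  by rewrite mulrnAl mulrnAr.
by rewrite [('X - c%:P) * _]mulrC -mulrA.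
Qed.

Definition gab (a b : R) (Q : nat) : {poly R} := (('X - a%:P) * ('X - b%:P)) ^+ Q.

Lemma gab_vanish a b Q i : (i < Q)%N ->
  root ((gab a b Q)^`(i)) a /\ root ((gab a b Q)^`(i)) b.
Proof.
move=> iQ; rewrite /gab exprMn; split.
  have [r ->] := @derivn_XsubC_factor a Q (('X - b%:P) ^+ Q) i (ltnW iQ).
  by rewrite /root !hornerE subrr expr0n subn_eq0 leqNgt iQ mul0r.
rewrite mulrC.
have [r ->] := @derivn_XsubC_factor b Q (('X - a%:P) ^+ Q) i (ltnW iQ).
by rewrite /root !hornerE subrr expr0n subn_eq0 leqNgt iQ mul0r.
Qed.

Lemma gab_orth a b Q j : (j <= Q)%N -> forall q : {poly R}, (size q <= j)%N ->
  J a b ((gab a b Q)^`(j) * q) = 0.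
Proof.
elim: j => [|j IH] hj q hq.
  by move: hq; rewrite leqn0 size_poly_eq0 => /eqP ->; rewrite mulr0 J0.
rewrite derivnS J_byparts IH ?(ltnW hj) //; last first.
  by apply: leq_trans (size_deriv_le q) _; rewrite -subn1 leq_subLR add1n.
have [ha hb] := gab_vanish a b hj.
move: ha hb; rewrite /root !hornerM => /eqP -> /eqP ->.
by rewrite !mul0r subrr subr0.
Qed.

End Alg.

Section Roll.
Variable R : realType.

Lemma path_last_ge (y : R) l : path <%R y l -> y <= last y l.
Proof.
elim: l y => [|z l IH] y /=; first by [].
move=> /andP[yz pz]; exact: le_trans (ltW yz) (IH _ pz).
Qed.

Lemma rolle_seq (p : {poly R}) (x : R) (l : seq R) :
  path <%R x l -> all (root p) (x :: l) ->
  exists s : seq R, [/\ size s = size l, sorted <%R s,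
     all (fun c => x < c) s, all (fun c => c < last x l) s &
     all (root p^`()) s].
Proof.
elim: l x => [|y l IH] x /=.
  by move=> _ _; exists [::].
move=> /andP[xy pyl] /and3P[rx ry rl].
have [c /[!in_itv] /= /andP[xc cy] hc] : {c | c \in `]x, y[ & p^`().[c] = 0}.
  by apply: poly_rolle => //; rewrite (eqP rx) (eqP ry).
have [s' [ss' srt' lo' hi' rt']] : exists s, _ := IH y pyl ltac:(by rewrite /= ry rl).
exists (c :: s'); split => //=.
- by rewrite ss'.
- rewrite lt_path_sortedE srt' andbT.
  by apply/allP => z zs; apply: lt_trans cy _; exact: (allP lo').
- rewrite xc /=; apply/allP => z zs; apply: lt_trans xy _; exact: (allP lo').
- by rewrite hi' andbT; exact: lt_le_trans cy (path_last_ge pyl).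
- by rewrite /root hc eqxx rt'.
Qed.

Lemma gab_nodes_j (a b : R) Q j : a < b -> (j <= Q)%N ->
  exists s : seq R, [/\ size s = j, sorted <%R s,
    all (fun c => a < c < b) s & all (root ((gab a b Q)^`(j))) s].
Proof.
move=> ab; elim: j => [|j IH] hj; first by exists [::].
have [s [ss srt bnd rts]] := IH (ltnW hj).
have [va vb] := gab_vanish a b hj.
have hp : path <%R a (rcons s b).
  rewrite rcons_path lt_path_sortedE srt andbT.
  apply/andP; split; first by apply/allP => z /(allP bnd) /andP[].
  have := mem_last a s; rewrite inE => /orP[/eqP ->//|/(allP bnd) /andP[]//].
have hr : all (root ((gab a b Q)^`(j))) (a :: rcons s b).
  by rewrite /= va all_rcons vb rts.
have [s' [ss' srt' lo' hi' rt']] := rolle_seq hp hr.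
exists s'; split => //.
- by rewrite ss' size_rcons ss.
- apply/allP => z zs; rewrite (allP lo') //=.
  by have := allP hi' z zs; rewrite last_rcons.
Qed.

Lemma gab_size (a b : R) Q : size (gab a b Q) = (Q + Q).+1.
Proof.
rewrite /gab exprMn size_mul ?expf_neq0 ?polyXsubC_eq0 //.
by rewrite !size_exp_XsubC addSn addnS.
Qed.

Lemma gab_lead (a b : R) Q : lead_coef (gab a b Q) = 1.
Proof.
apply/monicP; rewrite /gab; apply: monic_exp; by rewrite monicMl ?monicXsubC.
Qed.

Lemma Gab_neq0 (a b : R) Q : (gab a b Q)^`(Q) != 0.
Proof.
apply/eqP => /(congr1 (fun p : {poly R} => p`_Q)).
rewrite coef_derivn coef0.
have := gab_lead a b Q; rewrite lead_coefE gab_size /= => ->.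
by move/eqP; rewrite mulrn_eq0 oner_eq0 orbF eqn0Ngt ffact_gt0 leq_addl.
Qed.

Lemma Gab_size (a b : R) Q : (size ((gab a b Q)^`(Q)) <= Q.+1)%N.
Proof.
apply: leq_trans (size_derivn_le _ _) _.
by rewrite gab_size subSn ?leq_addr // addnK.
Qed.

Lemma gab_nodes (a b : R) Q : a < b ->
  exists s : seq R, [/\ size s = Q, uniq s,
    all (fun c => a < c < b) s & forall x, root ((gab a b Q)^`(Q)) x <-> x \in s].
Proof.
move=> ab; have [s [ss srt bnd rts]] := @gab_nodes_j a b Q Q ab (leqnn Q).
have us : uniq s by exact: (sorted_uniq lt_trans ltxx srt).
exists s; split => // x; split; last by move=> xs; exact: (allP rts).
move=> rx; apply/negPn/negP => xs.
have := @max_poly_roots _ _ (x :: s) (Gab_neq0 a b Q).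
rewrite /= rx rts xs us /= ss => /(_ isT isT) h.
by have := leq_ltn_trans (Gab_size a b Q) h; rewrite ltnn.
Qed.

End Roll.

Section GL.
Variable R : realType.

Definition ell (s : seq R) (t : R) : {poly R} :=
  \prod_(u <- s | u != t) (('X - u%:P) * ((t - u)^-1)%:P).

Lemma ell_eval (s : seq R) t t' : uniq s -> t' \in s ->
  (ell s t).[t'] = (t' == t)%:R.
Proof.
move=> us ts; rewrite /ell horner_prod.
have [->|ne] := eqVneq t' t.
  rewrite big1 // => u ut; rewrite !hornerE mulfV //.
  by rewrite subr_eq0 eq_sym.
rewrite -big_filter (bigD1_seq t') ?filter_uniq ?mem_filter ?ne //=.
by rewrite hornerM hornerXsubC subrr !mul0r.
Qed.

Lemma size_ell_gen (r : seq R) (P : pred R) (c : R -> R) :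
  (size (\prod_(u <- r | P u) (('X - u%:P) * (c u)%:P))%R <= (count P r).+1)%N.
Proof.
elim: r => [|u r IH]; first by rewrite big_nil size_poly1.
rewrite big_cons /=; case: (P u) => //=.
apply: leq_trans (size_mul_leq _ _) _.
have h1 : (size (('X - u%:P) * (c u)%:P)%R <= 2)%N.
  apply: leq_trans (size_mul_leq _ _) _.
  rewrite size_XsubC; case: (size (c u)%:P) (size_polyC_leq1 (c u)) => [|[|]] //.
move: h1 IH; rewrite (_ : (1 + count P r)%N = (count P r).+1) //.
move: (size (('X - u%:P) * (c u)%:P)%R) => A.
move: (size (\prod_(j <- r | P j) (('X - j%:P) * (c j)%:P))%R) => B. lia.
Qed.

Lemma size_ell (s : seq R) t : uniq s -> t \in s -> (size (ell s t) <= size s)%N.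
Proof.
move=> us ts; apply: leq_trans (size_ell_gen _ _ _) _.
have := count_predC (pred1 t) s; rewrite (count_uniq_mem _ us) ts.
have -> : count (predC (pred1 t)) s = count (fun u => u != t) s by [].
move=> <-; by rewrite add1n.
Qed.

Lemma interp (s : seq R) (r : {poly R}) : uniq s -> (size r <= size s)%N ->
  r = \sum_(t <- s) r.[t] *: ell s t.
Proof.
move=> us sr; apply/eqP; rewrite -subr_eq0; apply/eqP.
set d := _ - _.
have sd : (size d <= size s)%N.
  apply: leq_trans (size_add _ _) _; rewrite geq_max sr size_opp /=.
  rewrite big_seq; apply: (big_ind (fun p : {poly R} => size p <= size s)%N).
  - by rewrite size_poly0.
  - by move=> p q hp hq; apply: leq_trans (size_add _ _) _; rewrite geq_max hp hq.
  - move=> t ts; apply: leq_trans (size_scale_leq _ _) _; exact: size_ell.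
have rd : all (root d) s.
  apply/allP => t' ts'; rewrite /root /d hornerD hornerN horner_sum.
  rewrite (bigD1_seq t') //= hornerZ ell_eval // eqxx mulr1.
  rewrite big1 ?addr0 ?subrr // => t /negbTE ne.
  by rewrite hornerZ ell_eval // eq_sym ne mulr0.
apply/eqP; apply/negPn/negP => d0.
have := max_poly_roots d0 rd us => h.
by have := leq_trans h sd; rewrite ltnn.
Qed.

Lemma GL_exact (a b : R) Q (s : seq R) : a < b -> size s = Q -> uniq s ->
  (forall x, root ((gab a b Q)^`(Q)) x <-> x \in s) ->
  forall p : {poly R}, (size p <= Q + Q)%N ->
  J a b p = \sum_(t <- s) p.[t] * J a b (ell s t).
Proof.
move=> ab ss us rs p sp.
set G := (gab a b Q)^`(Q).
have G0 : G != 0 by exact: Gab_neq0.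
have sG : size G = Q.+1.
  apply/eqP; rewrite eqn_leq Gab_size /=.
  rewrite -ss; apply: max_poly_roots us => //; apply/allP => x xs; exact/rs.
rewrite (divp_eq p G) JD.
have -> : J a b ((p %/ G)%R * G) = 0.
  rewrite mulrC; apply: gab_orth => //.
  by rewrite size_divp // sG /= leq_subLR.
have sr : (size (p %% G)%R <= size s)%N by rewrite ss -ltnS -sG ltn_modp.
rewrite {1}(interp us sr) J_sum add0r; apply: eq_big_seq => t ts.
rewrite JZ hornerD hornerM.
by have /rs := ts; rewrite /root => /eqP ->; rewrite mulr0 add0r.
Qed.

End GL.

Section Comp.
Variable R : realType.

Lemma comp_polyXn_gen (p q : {poly R}) n : (p ^+ n) \Po q = (p \Po q) ^+ n.
Proof.
elim: n => [|n IH]; first by rewrite !expr0 -polyC1 comp_polyC.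
by rewrite !exprS comp_polyM IH.
Qed.

Lemma derivn_comp_lin (p lin : {poly R}) c n : lin^`() = c%:P ->
  (p \Po lin)^`(n) = c ^+ n *: (p^`(n) \Po lin).
Proof.
move=> hl; elim: n => [|n IH]; first by rewrite !derivn0 expr0 scale1r.
rewrite derivnS IH derivZ deriv_comp hl -derivnS mulrC mul_polyC scalerA exprSr.
by rewrite mulrC.
Qed.

Lemma lin_sq (a b : R) : a < b ->
  let e := (b - a)^-1 in
  (e%:P * ('X *+ 2 - (a%:P + b%:P))) ^+ 2 - 1 =
  (e ^+ 2 * 4)%:P * (('X - a%:P) * ('X - b%:P)).
Proof.
move=> ab e.
have h1 : (1 : {poly R}) = (e%:P * (b%:P - a%:P)) ^+ 2.
  by rewrite -polyCB -polyCM mulVf ?expr1n // subr_eq0 gt_eqF.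
rewrite {1}h1 polyCM rmorphXn.
have -> : (4 : R)%:P = 4 :> {poly R} by rewrite rmorph_nat.
ring.
Qed.


Lemma lroots_iff (a b t : R) Q : a < b ->
  lroots Q (resc a b t) <-> root ((gab a b Q)^`(Q)) t.
Proof.
move=> ab.
set e := (b - a)^-1.
set lin := e%:P * ('X *+ 2 - (a%:P + b%:P)).
have e0 : e != 0 by rewrite invr_eq0 subr_eq0 gt_eqF.
have hl : lin^`() = (e * 2)%:P.
  rewrite /lin derivM derivC mul0r add0r derivB derivMn derivX derivD !derivC.
  by rewrite addr0 subr0 polyCM rmorph_nat.
have hlt : lin.[t] = resc a b t.
  by rewrite /lin /resc !hornerE mulrC -mulr2n mulr_natl.
set h := ('X ^+ 2 - 1) ^+ Q : {poly R}.
have E1 := derivn_comp_lin h Q hl.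
have E2 : h \Po lin = (e ^+ 2 * 4) ^+ Q *: gab a b Q.
  rewrite /h comp_polyXn_gen comp_polyB comp_polyXn_gen comp_polyX -polyC1.
  rewrite comp_polyC polyC1 lin_sq // /gab exprMn -rmorphXn mul_polyC //.
rewrite E2 derivnZ in E1.
have Ev := congr1 (fun p => p.[t]) E1.
move: Ev => /=; rewrite hornerZ hornerZ horner_comp hlt => Ev.
rewrite /lroots /= /legendre rootZ; last first.
  by rewrite invr_eq0 pnatr_eq0 muln_eq0 expn_eq0 /= -lt0n fact_gt0.
have c1 : (e ^+ 2 * 4) ^+ Q != 0.
  by rewrite expf_neq0 // mulf_neq0 ?expf_neq0 // pnatr_eq0.
have c2 : (e * 2) ^+ Q != 0.
  by rewrite expf_neq0 // mulf_neq0 // pnatr_eq0.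
rewrite -/h /root; split => /eqP hr; apply/eqP.
  move: Ev; rewrite hr mulr0 => /eqP; rewrite mulf_eq0 (negbTE c1) /=.
  by move/eqP.
move: Ev; rewrite hr mulr0 => /esym/eqP; rewrite mulf_eq0 (negbTE c2) /=.
by move/eqP.
Qed.


Lemma poly_Rint (a b : R) (p : {poly R}) : a < b ->
  Rintegral lebesgue_measure `[a, b] (fun x => p.[x]) = J a b p.
Proof.
move=> ab; rewrite /Rintegral /J.
rewrite (@continuous_FTC2 _ _ (horner (prim p))) //.
- apply/continuous_subspaceT => x; exact: continuous_horner.
- split.
  + by move=> x _; exact: derivable_horner.
  + by apply: cvg_at_right_filter; exact: continuous_horner.
  + by apply: cvg_at_left_filter; exact: continuous_horner.
- by move=> x _; rewrite -derivE primK.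
Qed.

Lemma resc_inj (a b x y : R) : a < b -> resc a b x = resc a b y -> x = y.
Proof.
move=> ab; rewrite /resc => /(congr1 (fun z => z * (b - a))).
rewrite !divfK ?subr_eq0 ?gt_eqF //; lra.
Qed.

Lemma resc_node (a b c : R) : a < b -> resc a b (((b - a) * c + (a + b)) / 2) = c.
Proof.
move=> ab; rewrite /resc.
have h : b - a != 0 by rewrite subr_eq0 gt_eqF.
field; exact: h.
Qed.

Lemma gl_weight_nz (a b t : R) Q : gl_weight Q a b t != 0 ->
  a < b /\ root ((gab a b Q)^`(Q)) t.
Proof.
rewrite /gl_weight; case: pselect => [[ab hr] _|_]; last by rewrite eqxx.
by split => //; apply/lroots_iff.
Qed.

Lemma gl_weight_node (a b : R) Q (s : seq R) t : a < b -> uniq s ->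
  (forall x, root ((gab a b Q)^`(Q)) x <-> x \in s) -> t \in s ->
  gl_weight Q a b t = J a b (ell s t).
Proof.
move=> ab us rs ts.
rewrite /gl_weight; case: pselect => [_|nh]; last first.
  by exfalso; apply: nh; split => //; apply/lroots_iff => //; apply/rs.
rewrite -poly_Rint //; apply: eq_Rintegral => x _.
have hba : b - a != 0 by rewrite subr_eq0 gt_eqF.
have -> : [set c | lroots Q c /\ c <> resc a b t] =
    [set resc a b u | u in [set` [seq u <- s | u != t]]].
  apply/seteqP; split => c /=.
    move=> [hl hne]; exists (((b - a) * c + (a + b)) / 2); last exact: resc_node.
    rewrite mem_filter; apply/andP; split.
      apply/eqP => ht; apply: hne; rewrite -ht resc_node //.
    by apply/rs; apply/lroots_iff => //; rewrite resc_node.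
  move=> [u]; rewrite mem_filter => /andP[ut us'] <-; split.
    by apply/lroots_iff => //; apply/rs.
  by move=> /(resc_inj ab) eut; rewrite eut eqxx in ut.
rewrite fsbig_image; last by move=> u v _ _; exact: resc_inj.
rewrite -fsbig_seq ?filter_uniq // big_filter /ell horner_prod.
apply: eq_bigr => u ut; rewrite hornerM hornerXsubC hornerC /resc.
have tu : t - u != 0 by rewrite subr_eq0 eq_sym.
field.
have -> : 2 * t - (2 * u - (a + b)) - (a + b) = 2 * (t - u) by ring.
by rewrite tu hba mulf_neq0 // pnatr_eq0.
Qed.

End Comp.

Section Main.
Variable R : realType.

Lemma seq_sub_sum (N F : seq R) (h : R -> R) : uniq N -> uniq F ->
  {subset N <= F} -> (forall x, x \in F -> x \notin N -> h x = 0) ->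
  \sum_(x <- F) h x = \sum_(x <- N) h x.
Proof.
move=> uN uF sNF hz.
rewrite (bigID (fun x => x \in N)) /= [X in _ + X]big1_seq ?addr0; last first.
  by move=> x /andP[xN xF]; exact: hz.
rewrite -big_filter; apply: perm_big; apply: uniq_perm => //.
  exact: filter_uniq.
by move=> x; rewrite mem_filter; case: (boolP (x \in N)) => // /sNF ->.
Qed.

Lemma GL_sum (a b : R) Q (F : seq R) (p : {poly R}) : a < b -> uniq F ->
  (forall t, root ((gab a b Q)^`(Q)) t -> t \in F) -> (size p <= Q + Q)%N ->
  \sum_(t <- F) gl_weight Q a b t * p.[t] = J a b p.
Proof.
move=> ab uF hF sp.
have [s [ss us _ rs]] := gab_nodes Q ab.
rewrite (@seq_sub_sum s) //; first last.
- move=> x _ xs; apply/eqP; rewrite mulf_eq0; apply/orP; left.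
  apply/negPn/negP => /gl_weight_nz [_ /rs]; by rewrite (negbTE xs).
- by move=> x /rs /hF.
rewrite (GL_exact ab ss us rs sp); apply: eq_big_seq => t ts.
by rewrite (gl_weight_node ab us rs ts) mulrC.
Qed.

Lemma fsum_seq (A : set R) (F : seq R) (h : R -> R) : uniq F ->
  (forall x, A x -> h x != 0 -> x \in F) ->
  \sum_(x \in A) h x = \sum_(x <- F | x \in A) h x.
Proof.
move=> uF hF.
have -> : \sum_(x <- F | x \in A) h x = \sum_(x \in [set` [seq x <- F | x \in A]]) h x.
  by rewrite -fsbig_seq ?filter_uniq // big_filter.
apply: esym; apply: fsbig_widen.
  by move=> x /=; rewrite mem_filter => /andP[/set_mem].
move=> x [Ax nx]; apply/eqP/negPn/negP => hx.
by apply: nx; rewrite /= mem_filter (hF x Ax hx) andbT; apply/mem_set.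
Qed.

Lemma fsum_nz (A : set R) (h : R -> R) : \sum_(x \in A) h x != 0 ->
  exists x, A x /\ h x != 0.
Proof.
move=> hs; have [//|nex] := pselect (exists x, A x /\ h x != 0).
move: hs; rewrite fsbig1 ?eqxx // => x Ax.
by apply/eqP/negPn/negP => hx; apply: nex; exists x.
Qed.

End Main.

Lemma fsum_seqA (R : realType) (V : Type) (idx : V) (op : Monoid.com_law idx)
  (A : set R) (F : seq R) (h : R -> V) : uniq F ->
  (forall x, x \in F -> A x) -> (forall x, A x -> h x <> idx -> x \in F) ->
  \big[op/idx]_(x \in A) h x = \big[op/idx]_(x <- F) h x.
Proof.
move=> uF FA hF; rewrite [RHS]fsbig_seq //; apply: esym; apply: fsbig_widen.
  by move=> x /= xF; exact: FA.
move=> x [Ax nx] /=; apply: contra_notP nx => hx; exact: hF.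
Qed.

Section Main.
Variable R : realType.
Variable T : R.
Hypothesis T0 : 0 < T.
Variable Q : nat.

Lemma nodes_ex (a b : R) : exists s : seq R, a < b -> [/\ uniq s,
  all (fun c => a < c < b) s & forall x, root ((gab a b Q)^`(Q)) x <-> x \in s].
Proof.
have [ab|nab] := boolP (a < b); last by exists [::].
have [s [_ us bs rs]] := gab_nodes Q ab; by exists s.
Qed.

Definition nodes a b := proj1_sig (cid (nodes_ex a b)).
Lemma nodesP a b : a < b -> [/\ uniq (nodes a b),
  all (fun c => a < c < b) (nodes a b) &
  forall x, root ((gab a b Q)^`(Q)) x <-> x \in nodes a b].
Proof. exact: proj2_sig (cid (nodes_ex a b)). Qed.

Fixpoint Fseq m : seq R := if m is m'.+1 then
  undup (flatten [seq (if s < T then nodes s T else [::]) | s <- Fseq m'])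
  else [:: 0].

Lemma F_uniq m : uniq (Fseq m).
Proof. by case: m => [|m] //=; exact: undup_uniq. Qed.

Lemma F_bnd m t : t \in Fseq m -> 0 <= t <= T.
Proof.
elim: m t => [|m IH] t /=.
  by rewrite inE => /eqP ->; rewrite lexx ltW.
rewrite mem_undup => /flatten_mapP [s sF].
case: ifP => // sT /(fun h => h) ts.
have [_ /allP/(_ t ts) /andP[st tT] _] := nodesP sT.
have /andP[s0 _] := IH s sF.
by rewrite (ltW tT) andbT; exact: le_trans s0 (ltW st).
Qed.

Lemma F_nodes m s : s \in Fseq m -> s < T -> {subset nodes s T <= Fseq m.+1}.
Proof.
move=> sF sT t ts /=; rewrite mem_undup; apply/flatten_mapP.
by exists s => //; rewrite sT.
Qed.

Lemma F_supp m t : qbar T Q m t != 0 -> t \in Fseq m.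
Proof.
elim: m t => [|m IH] t /=.
  by case: ifP => [/eqP ->|]; rewrite ?inE ?eqxx //.
move=> /fsum_nz [s [_ ]]; rewrite mulf_eq0 negb_or => /andP[qs ws].
have [sT rt] := gl_weight_nz ws.
apply: (F_nodes (IH _ qs) sT).
by have [_ _ /(_ t) []] := nodesP sT; move=> h _; exact: h.
Qed.


Definition fj j : {poly R} := ((j`!)%:R)^-1 *: (T%:P - 'X) ^+ j.

Lemma fjE j x : (fj j).[x] = (T - x) ^+ j / (j`!)%:R.
Proof. by rewrite /fj hornerZ !hornerE mulrC. Qed.


Lemma fj_deriv j : (fj j.+1)^`() = - fj j.
Proof.
rewrite /fj derivZ (derivCE R).2 derivB derivC derivX sub0r mulN1r /=.
rewrite -[- _ *+ _]scaler_nat scalerA scalerN; congr (- (_ *: _)).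
by rewrite factS natrM invfM mulrAC mulVf ?pnatr_eq0 // mul1r.
Qed.

Lemma size_fj j : (size (fj j) <= j.+1)%N.
Proof.
apply: leq_trans (size_scale_leq _ _) _.
apply: leq_trans (size_poly_exp_leq _ _) _.
by rewrite -opprB size_opp size_XsubC mul1n.
Qed.

Lemma J_fj s j : J s T (fj j) = (fj j.+1).[s].
Proof.
rewrite (@J_prim _ s T _ (- fj j.+1)); last by rewrite derivN fj_deriv opprK.
by rewrite !hornerN !fjE subrr expr0n /= mul0r oppr0 sub0r opprK.
Qed.


Lemma qbar_step m t :
  qbar T Q m.+1 t = \sum_(s <- Fseq m) qbar T Q m s * gl_weight Q s T t.
Proof.
rewrite /= (@fsum_seq _ _ (Fseq m)) ?F_uniq //; last first.
  by move=> x _; rewrite mulf_eq0 negb_or => /andP[/F_supp].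
rewrite [RHS](bigID (fun s => s \in `[0, t]%classic)) /= [X in _ = _ + X]big1_seq ?addr0 //.
move=> s /andP[snt sF]; apply/eqP; rewrite mulf_eq0; apply/orP; right.
apply/negPn/negP => /gl_weight_nz [sT rt].
have [_ /allP hb /(_ t) [/(_ rt) tn _]] := nodesP sT.
have /andP[st _] := hb t tn.
have /andP[s0 _] := F_bnd sF.
apply: (negP snt); apply/mem_set; by rewrite /= in_itv /= s0 (ltW st).
Qed.


Lemma main_ind m : forall j, (m + j <= Q + Q)%N ->
  \sum_(t \in `[0, T]%classic) qbar T Q m t * (fj j).[t] = (fj (m + j)).[0].
Proof.
elim: m => [|m IH] j hmj.
  rewrite (@fsum_seqA _ _ _ _ `[0, T]%classic [:: 0]) //.
  - by rewrite big_seq1 /= eqxx mul1r add0n.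
  - by move=> x; rewrite inE => /eqP ->; rewrite /= in_itv /= lexx ltW.
  - move=> x _ /eqP; rewrite mulf_eq0 negb_or => /andP[/F_supp]; done.
rewrite (@fsum_seqA _ _ _ _ `[0, T]%classic (Fseq m.+1)) //; first last.
- by move=> x _ /eqP; rewrite mulf_eq0 negb_or => /andP[/F_supp].
- by move=> x /F_bnd hx; rewrite /= in_itv /=.
- exact: F_uniq.
under eq_bigr do rewrite qbar_step big_distrl.
rewrite exchange_big /=.
transitivity (\sum_(s <- Fseq m) qbar T Q m s * (fj j.+1).[s]); last first.
  rewrite -(@fsum_seqA _ _ _ _ `[0, T]%classic (Fseq m)) ?F_uniq //.
  - by rewrite IH ?addSn ?addnS.
  - by move=> x /F_bnd hx; rewrite /= in_itv /=.
  - by move=> x _ /eqP; rewrite mulf_eq0 negb_or => /andP[/F_supp].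
apply: eq_big_seq => s sF.
under eq_bigr do rewrite -mulrA.
rewrite -big_distrr; congr (_ * _).
have [sT|nsT] := boolP (s < T).
  rewrite GL_sum ?J_fj ?undup_uniq //.
  - by move=> t rt; apply: (F_nodes sF sT); have [_ _ /(_ t) [h _]] := nodesP sT; exact: h.
  - by apply: leq_trans (size_fj j) _; move: hmj; lia.
have sTe : s = T.
  by have /andP[_ sle] := F_bnd sF; apply/eqP; rewrite eq_le sle leNgt nsT.
rewrite sTe fjE subrr expr0n /= mul0r big1 // => t _.
apply/eqP; rewrite mulf_eq0; apply/orP; left.
by apply/negPn/negP => /gl_weight_nz []; rewrite ltxx.
Qed.

End Main.

Lemma sup_img (R : realType) (X : Type) (A : set X) (f : X -> \bar R) c :
  (exists u, A u) -> (forall u, A u -> f u = c) -> ereal_sup [set f u | u in A] = c.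
Proof.
move=> [u0 Au0] hf.
have -> : [set f u | u in A] = [set c].
  apply/seteqP; split => x /=; first by move=> [u Au <-]; exact: hf.
  by move=> ->; exists u0 => //; exact: hf.
exact: ereal_sup1.
Qed.

Unset Implicit Arguments.

Theorem lemma3p8 (R : realType) (T : R) (hT : 0 < T) (d : nat)
  (dO : measure_display) (Omega : measurableType dO)
  (P : probability Omega R) (W : R -> Omega -> 'rV[R]_d)
  (Q : nat) (hQ : (0 < Q)%N) (k : nat) (hk : (k <= 2 * Q - 1)%N) :
  seminorm T P W (fun _ _ => 1) k Q = ((T ^+ k) / (k`!)%:R)%:E.
Proof.
rewrite /seminorm.
have hint : esqrt (\int[P]_w ((1 : R) ^+ 2)%:E) = 1%E.
  rewrite expr1n integral_cst //= probability_setT mul1e /= sqrtr1 //.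
rewrite (eq_fsbigr (fun t => (qbar T Q k t)%:E)); last first.
  move=> t /set_mem; rewrite /= in_itv /= => /andP[t0 tT].
  rewrite (@sup_img _ _ _ _ 1%E) ?mule1 //.
    by exists t; rewrite /= in_itv /= lexx tT.
  move=> s; rewrite /= in_itv /= => /andP[ts sT].
  apply: sup_img.
    by exists 0; rewrite /= in_itv /= lexx (le_trans t0 ts).
  move=> u _; apply: sup_img; first by exists 0.
  by move=> z _; exact: hint.
rewrite (@fsum_seqA _ _ _ _ `[0, T]%classic (Fseq T Q k)) ?F_uniq //; first last.
- move=> x _ hx; apply: F_supp; apply/eqP => h0; apply: hx; by rewrite h0.
- by move=> x /(F_bnd hT) hx; rewrite /= in_itv /=.
rewrite sumEFin; congr (_%:E).
have hkk : (k + 0 <= Q + Q)%N by move: hk hQ; lia.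
have := main_ind hT hkk; rewrite addn0 fjE subr0 => <-.
rewrite (@fsum_seqA _ _ _ _ `[0, T]%classic (Fseq T Q k)) ?F_uniq //; first last.
- by move=> x _ /eqP; rewrite mulf_eq0 negb_or => /andP[/F_supp].
- by move=> x /(F_bnd hT) hx; rewrite /= in_itv /=.
by apply: eq_bigr => t _; rewrite fjE expr0 fact0 divr1 mulr1.
Qed.
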